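(* For every $j\ge1$, $a'=1,\dots,p_1$, $b'=1,\dots,p_2$, $$\Big(\sum_{a=1}^{p_1}\frac{\partial}{\partial t_{j,a}}+\sum_{b=1}^{p_2}\frac{\partial}{\partial\bar t_{j,b}}\Big)X=0\qquad\text{for }X\in\{L_{a'},\ \bar L_{b'},\ \mathcal A_{a'},\ \bar{\mathcal A}_{b'}\}.$$
   Context: $\mu$ finite Borel measure on an interval; weights $w_{1,a}$ ($a\le p_1$), $w_{2,b}$ ($b\le p_2$); compositions $\vec n_\ell\in\mathbb N^{p_\ell}$; each $i\in\mathbb Z_+$ is uniquely $i=q|\vec n_\ell|+n_{\ell,1}+\dots+n_{\ell,a-1}+r$ ($0\le r<n_{\ell,a}$), $a_\ell(i)=a$, $k_\ell(i)=qn_{\ell,a}+r$; moment matrix $g_{i,j}=\int x^{k_1(i)+k_2(j)}w_{1,a_1(i)}w_{2,a_2(j)}d\mu$. $e_{\ell,a}(k)=e_i$ with $a_\ell(i)=a,k_\ell(i)=k$; $\Lambda_{\ell,a}=\sum_ke_{\ell,a}(k)e_{\ell,a}(k+1)^\top$; $\chi_{\ell,a}(x)=\sum_ke_{\ell,a}(k)x^k$. Real times $t=(t_{j,a},\bar t_{j,b})$; $W_0(t)=\exp(\sum_{a,j}t_{j,a}\Lambda_{1,a}^j)$, $\bar W_0(t)=\exp(\sum_{b,j}\bar t_{j,b}(\Lambda_{2,b}^\top)^j)$, $g(t)=W_0(t)g\bar W_0(t)^{-1}$ (integrals assumed convergent), assumed to factorize smoothly in $t$ as $g(t)=S(t)^{-1}\bar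 S(t)$ with $S$ unit lower triangular and $\bar S$ upper triangular invertible. $L_a=S\Lambda_{1,a}S^{-1}$, $\bar L_b=\bar S\Lambda_{2,b}^\top\bar S^{-1}$, $\mathcal A_a(x,t)=S(t)\chi_{1,a}(x)$, $\bar{\mathcal A}_b(x,t)=(\bar S(t)^{-1})^\top\chi_{2,b}(x)$ (derivatives taken at fixed $x$). *)

(* Defs.v *)
From HB Require Import structures.
From mathcomp Require Import all_boot all_order all_algebra.
From mathcomp Require Import all_classical all_reals all_analysis.
Set Implicit Arguments. Unset Strict Implicit. Unset Printing Implicit Defensive.
Import Order.TTheory GRing.Theory Num.Theory.
Import numFieldNormedType.Exports.
Local Open Scope ring_scope.
Local Open Scope classical_set_scope.

(* Indices i \in Z_+ are nat (0,1,2,...).  A composition is n : 'I_p -> nat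
   (component a of the paper is the ordinal a-1). *)

Definition csize p (n : 'I_p -> nat) : nat := (\sum_(b < p) n b)%N.
Definition cprefix p (n : 'I_p -> nat) (a : 'I_p) : nat :=
  (\sum_(b < p | (b < a)%N) n b)%N.
(* a(i): the unique a with i = q|n| + n_1+..+n_{a-1} + r, 0 <= r < n_a *)
Definition aidx p (n : 'I_p -> nat) (i : nat) : option 'I_p :=
  [pick a | (cprefix n a <= i %% csize n < cprefix n a + n a)%N].
(* k(i) = q n_a + r  (used with a = a(i)) *)
Definition kidx p (n : 'I_p -> nat) (i : nat) (a : 'I_p) : nat :=
  (i %/ csize n * n a + (i %% csize n - cprefix n a))%N.

Definition smx (R : Type) := nat -> nat -> R.
Definition svec (R : Type) := nat -> R.

(* Lambda_{l,a} = sum_k e_{l,a}(k) e_{l,a}(k+1)^T *)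
Definition Lam (R : pzRingType) p (n : 'I_p -> nat) (a : 'I_p) : smx R :=
  fun i i' => if (aidx n i == Some a) && (aidx n i' == Some a)
                 && (kidx n i' a == (kidx n i a).+1) then 1 else 0.

(* chi_{l,a}(x) = sum_k e_{l,a}(k) x^k *)
Definition chi (R : pzRingType) p (n : 'I_p -> nat) (a : 'I_p) (x : R) : svec R :=
  fun i => if aidx n i == Some a then x ^+ kidx n i a else 0.

Definition rsum (R : realType) (m : nat) (F : nat -> R) : R :=
  limn (fun N => \sum_(m <= k < N) F k).

Definition smul (R : realType) (A B : smx R) : smx R :=
  fun i k => rsum 0 (fun m => A i m * B m k).
Definition smulv (R : realType) (A : smx R) (v : svec R) : svec R :=
  fun i => rsum 0 (fun m => A i m * v m).
Definition strans (R : Type) (A : smx R) : smx R := fun i k => A k i.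

(* inverse of a (lower or upper) triangular semi-infinite matrix with
   invertible diagonal: its leading N x N blocks are the inverses of the
   leading N x N blocks of A *)
Definition trinv (R : realType) (A : smx R) : smx R :=
  fun i j => let N := (maxn i j).+1 in
    invmx (\matrix_(k < N, l < N) A k l) (inord i) (inord j).

(* times: t j a = t_{j,a}, tb j b = \bar t_{j,b}  (only j >= 1 are used) *)
Definition times1 (R : Type) p1 := nat -> 'I_p1 -> R.

(* integrand of g(t)_{i,l} = (W_0(t) g \bar W_0(t)^{-1})_{i,l}
   = int x^{k1(i)+k2(l)} w_{1,a1(i)} w_{2,a2(l)}
         exp(sum_j t_{j,a1(i)} x^j) exp(-sum_j \bar t_{j,a2(l)} x^j) dmu *)
Definition gintegrand (R : realType) p1 p2 (n1 : 'I_p1 -> nat) (n2 : 'I_p2 -> nat)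
  (w1 : 'I_p1 -> R -> R) (w2 : 'I_p2 -> R -> R)
  (t : times1 R p1) (tb : times1 R p2) (i l : nat) : R -> R :=
  fun x => match aidx n1 i, aidx n2 l with
  | Some a, Some b =>
      x ^+ (kidx n1 i a + kidx n2 l b) * w1 a x * w2 b x *
      (expR (rsum 1 (fun j => t j a * x ^+ j)) *
       expR (- rsum 1 (fun j => tb j b * x ^+ j)))
  | _, _ => 0
  end.

Definition gt (R : realType) (mu : {measure set R -> \bar R}) (I : interval R)
  p1 p2 (n1 : 'I_p1 -> nat) (n2 : 'I_p2 -> nat)
  (w1 : 'I_p1 -> R -> R) (w2 : 'I_p2 -> R -> R)
  (t : times1 R p1) (tb : times1 R p2) : smx R :=
  fun i l => Rintegral mu [set` I] (gintegrand n1 n2 w1 w2 t tb i l).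

Definition tshift (R : realType) p (t : times1 R p) (j : nat) (a : 'I_p) (s : R)
  : times1 R p :=
  fun j' a' => if (j' == j) && (a' == a) then t j' a' + s else t j' a'.

Definition tblock1 (R : realType) p1 p2 (t : times1 R p1) (j : nat)
  (u : 'rV[R]_(p1 + p2)) : times1 R p1 :=
  fun j' a => if j' == j then t j' a + u ord0 (lshift p2 a) else t j' a.
Definition tblock2 (R : realType) p1 p2 (tb : times1 R p2) (j : nat)
  (u : 'rV[R]_(p1 + p2)) : times1 R p2 :=
  fun j' b => if j' == j then tb j' b + u ord0 (rshift p1 b) else tb j' b.

Definition dt1 (R : realType) p1 p2 (F : times1 R p1 -> times1 R p2 -> R)
  (t : times1 R p1) (tb : times1 R p2) (j : nat) (a : 'I_p1) : R :=
  derive1 (fun s => F (tshift t j a s) tb) 0.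
Definition dt2 (R : realType) p1 p2 (F : times1 R p1 -> times1 R p2 -> R)
  (t : times1 R p1) (tb : times1 R p2) (j : nat) (b : 'I_p2) : R :=
  derive1 (fun s => F t (tshift tb j b s)) 0.

Definition diagD (R : realType) p1 p2 (F : times1 R p1 -> times1 R p2 -> R)
  (t : times1 R p1) (tb : times1 R p2) (j : nat) : R :=
  \sum_(a < p1) dt1 F t tb j a + \sum_(b < p2) dt2 F t tb j b.

Definition Lop (R : realType) p1 (n1 : 'I_p1 -> nat) (S : smx R) (a : 'I_p1) : smx R :=
  smul (smul S (Lam R n1 a)) (trinv S).
Definition Lbop (R : realType) p2 (n2 : 'I_p2 -> nat) (Sb : smx R) (b : 'I_p2) : smx R :=
  smul (smul Sb (strans (Lam R n2 b))) (trinv Sb).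
Definition Aop (R : realType) p1 (n1 : 'I_p1 -> nat) (S : smx R) (a : 'I_p1) (x : R)
  : svec R := smulv S (chi n1 a x).
Definition Abop (R : realType) p2 (n2 : 'I_p2 -> nat) (Sb : smx R) (b : 'I_p2) (x : R)
  : svec R := smulv (strans (trinv Sb)) (chi n2 b x).

(* times with only finitely many nonzero entries (so that the series
   sum_j t_{j,a} x^j in the exponent are finite sums) *)
Definition fsupp (R : realType) p (t : times1 R p) : Prop :=
  exists N : nat, forall j a, (N < j)%N -> t j a = 0.

(* Main.v *)
Require Import Defs.
From HB Require Import structures.
From mathcomp Require Import all_boot all_order all_algebra.
From mathcomp Require Import all_classical all_reals all_analysis.
From mathcomp Require Import zify.
Import Order.TTheory GRing.Theory Num.Theory.
Import numFieldNormedType.Exports.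
Local Open Scope ring_scope.

Section Key.
Variables (R : realType) (p1 p2 : nat).

Lemma sum_delta_const :
  \sum_(a < p1) (delta_mx 0 (lshift p2 a) : 'rV[R]_(p1 + p2))
  + \sum_(b < p2) delta_mx 0 (rshift p1 b) = const_mx 1.
Proof.
rewrite -(big_split_ord _ xpredT (fun c : 'I_(p1+p2) => (delta_mx 0 c : 'rV[R]_(p1 + p2)))) /=; apply/matrixP => i c.
rewrite summxE !mxE (bigD1 c) //= big1 ?addr0.
  by rewrite !mxE ord1 !eqxx.
move=> k /negbTE kc; rewrite !mxE. by rewrite [c == k]eq_sym kc andbF.
Qed.

Lemma derive1_dir (G : 'rV[R]_(p1+p2) -> R) (e : 'rV[R]_(p1+p2)) :
  derive1 (fun s => G (s *: e)) 0 = 'D_e G 0.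
Proof.
rewrite /derive1 /derive.
have -> : (fun h : R => h^-1 *: ((fun s => G (s *: e)) (h + 0) - (fun s => G (s *: e)) 0))
  = (fun h => h^-1 *: ((G \o shift 0) (h *: e) - G 0)).
  by apply: funext => h /=; rewrite !addr0 scale0r.
by [].
Qed.

Lemma key (F : times1 R p1 -> times1 R p2 -> R) (t : times1 R p1) (tb : times1 R p2) j :
  differentiable (fun u : 'rV[R]_(p1+p2) => F (tblock1 t j u) (tblock2 tb j u)) 0 ->
  (forall s : R, F (tblock1 t j (s *: (const_mx 1 : 'rV[R]_(p1+p2)))) (tblock2 tb j (s *: (const_mx 1 : 'rV[R]_(p1+p2))))
        = F (tblock1 t j (0 : 'rV[R]_(p1+p2))) (tblock2 tb j (0 : 'rV[R]_(p1+p2)))) ->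
  diagD F t tb j = 0.
Proof.
set G := fun u : 'rV[R]_(p1+p2) => F (tblock1 t j u) (tblock2 tb j u).
move=> dG inv.
have E1 : forall a, dt1 F t tb j a = 'D_(delta_mx 0 (lshift p2 a)) G 0.
  move=> a; rewrite /dt1 -derive1_dir.
  suff H : (fun s => F (tshift t j a s) tb) = (fun s => G (s *: delta_mx 0 (lshift p2 a))) by rewrite H.
  apply: funext => s.
  rewrite /G; congr F; apply: funext => j'; apply: funext => a'.
    rewrite /tshift /tblock1 !mxE eqxx /= eq_shift.
    by case: (j' == j) => //=; case: (a' == a) => /=; rewrite ?mulr0 ?addr0 ?mulr1.
  by rewrite /tblock2 !mxE eq_shift /= mulr0 addr0; case: ifP.
have E2 : forall b, dt2 F t tb j b = 'D_(delta_mx 0 (rshift p1 b)) G 0.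
  move=> b; rewrite /dt2 -derive1_dir.
  suff H : (fun s => F t (tshift tb j b s)) = (fun s => G (s *: delta_mx 0 (rshift p1 b))) by rewrite H.
  apply: funext => s.
  rewrite /G; congr F; apply: funext => j'; apply: funext => a'.
    by rewrite /tblock1 !mxE eq_shift /= mulr0 addr0; case: ifP.
  rewrite /tshift /tblock2 !mxE eqxx /= eq_shift.
  by case: (j' == j) => //=; case: (a' == b) => /=; rewrite ?mulr0 ?addr0 ?mulr1.
rewrite /diagD (eq_bigr _ (fun a _ => E1 a)) (eq_bigr _ (fun b _ => E2 b)).
rewrite (eq_bigr _ (fun a _ => deriveE _ dG)) (eq_bigr (fun b => 'd G 0 (delta_mx 0 (rshift p1 b))) (fun b _ => deriveE _ dG)).
rewrite -!linear_sum -linearD sum_delta_const -deriveE //.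
rewrite /derive; apply: lim_near_cst => //; near=> h => /=.
have inv2 : forall s, G (s *: const_mx 1) = G 0 := inv.
rewrite [G _](_ : _ = G 0) ?subrr ?scaler0 //.
transitivity (G (h *: const_mx 1)); last exact: inv2.
by congr G; exact: addr0.
Unshelve. all: by end_near.
Qed.
End Key.

Section Fin.
Variable R : fieldType.

Lemma inv_lower n (A : 'M[R]_n) :
  (forall i j : 'I_n, (i < j)%N -> A i j = 0) -> (forall i, A i i != 0) ->
  [/\ A \in unitmx, forall i j : 'I_n, (i < j)%N -> invmx A i j = 0
    & forall i, invmx A i i = (A i i)^-1].
Proof.
move=> lo dg.
have uA : A \in unitmx.
  rewrite unitmxE unitfE det_trig; last by apply/is_trig_mxP.
  by apply/prodf_neq0 => i _; exact: dg.
have AB := mulmxV uA.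
have lt : forall i j : 'I_n, (i < j)%N -> invmx A i j = 0.
{ suff H : forall k (i j : 'I_n), (i <= k)%N -> (i < j)%N -> invmx A i j = 0.
    by move=> i j; apply: H (leqnn i).
  elim=> [|k IH] i j ik ij.
  all: have := congr1 (fun M : 'M[R]_n => M i j) AB; rewrite !mxE (bigD1 i) //= big1 ?addr0.
  all: case: (i =P j) => [ije|_]; first by rewrite ije ltnn in ij.
  all: try (by move/eqP; rewrite mulf_eq0 (negbTE (dg i)) /= => /eqP).
  - move=> m mi; case: (ltngtP m i) => [mlti|iltm|/val_inj mi']; last by rewrite mi' eqxx in mi.
    + by move: ik; rewrite leqn0 => /eqP i0; rewrite i0 in mlti.
    + by rewrite lo // mul0r.
  - move=> m mi; case: (ltngtP m i) => [mlti|iltm|/val_inj mi']; last by rewrite mi' eqxx in mi.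
    + by rewrite (IH m j) ?mulr0 //; [rewrite -ltnS; exact: leq_trans mlti ik | exact: ltn_trans mlti ij].
    + by rewrite lo // mul0r. }
split=> // i.
have := congr1 (fun M : 'M[R]_n => M i i) AB; rewrite !mxE eqxx (bigD1 i) //= big1 ?addr0.
  by move=> E; apply: (mulfI (dg i)); rewrite E mulfV ?eqxx.
move=> m mi; case: (ltngtP m i) => [mlti|iltm|/val_inj mi']; last by rewrite mi' eqxx in mi.
  by rewrite lt // mulr0.
by rewrite lo // mul0r.
Qed.

Lemma inv_upper n (A : 'M[R]_n) :
  (forall i j : 'I_n, (j < i)%N -> A i j = 0) -> (forall i, A i i != 0) ->
  [/\ A \in unitmx, forall i j : 'I_n, (j < i)%N -> invmx A i j = 0
    & forall i, invmx A i i = (A i i)^-1].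
Proof.
move=> up dg.
have [uT ltT dT] : _ := @inv_lower n A^T (fun i j ij => ltac:(by rewrite mxE up)) (fun i => ltac:(by rewrite mxE)).

have uA : A \in unitmx by rewrite -unitmx_tr.
split=> // [i j ji|i].
  by have := ltT j i ji; rewrite -trmx_inv mxE.
by have := dT i; rewrite -trmx_inv !mxE.
Qed.
End Fin.

Section Tri.
Variable R : realType.

Definition lowerT (A : smx R) := forall i j, (i < j)%N -> A i j = 0.
Definition upperT (A : smx R) := forall i j, (j < i)%N -> A i j = 0.
Definition diagnz (A : smx R) := forall i, A i i != 0.

Lemma rsum_fin (F : nat -> R) m M : (m <= M)%N -> (forall k, (M <= k)%N -> F k = 0) ->
  rsum m F = \sum_(m <= k < M) F k.
Proof.
move=> mM FM; rewrite /rsum; apply: lim_near_cst => //; exists M => // N /= MN.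
rewrite (big_cat_nat mM MN) /= [X in _ + X]big_nat_cond [X in _ + X]big1 ?addr0 //.
by move=> k /andP [/andP [Mk _] _]; exact: FM.
Qed.

Section Low.
Variable A : smx R.
Hypotheses (lo : lowerT A) (dg : diagnz A).

Lemma blk_lo N : forall i j : 'I_N, (i < j)%N -> (\matrix_(k < N, l < N) A k l) i j = 0.
Proof. by move=> i j ij; rewrite mxE lo. Qed.
Lemma blk_dg N : forall i : 'I_N, (\matrix_(k < N, l < N) A k l) i i != 0.
Proof. by move=> i; rewrite mxE dg. Qed.

Lemma TR1 i j : (i < j)%N -> trinv A i j = 0.
Proof.
move=> ij; rewrite /trinv; have [_ lt _] := @inv_lower _ _ _ (blk_lo (maxn i j).+1) (blk_dg _).
by apply: lt; rewrite !inordK // ltnS ?leq_maxl ?leq_maxr.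
Qed.

Lemma TR2 i : trinv A i i = (A i i)^-1.
Proof.
rewrite /trinv maxnn; have [_ _ dT] := @inv_lower _ _ _ (blk_lo i.+1) (blk_dg _).
by rewrite dT mxE inordK.
Qed.

Lemma TRc N M i j : (M <= N)%N -> (i <= M)%N -> (j <= M)%N ->
  invmx (\matrix_(k < N.+1, l < N.+1) A k l) (inord i) (inord j)
  = invmx (\matrix_(k < M.+1, l < M.+1) A k l) (inord i) (inord j).
Proof.
move=> MN iM jM.
set BN := \matrix_(k < N.+1, l < N.+1) A k l.
set BM := \matrix_(k < M.+1, l < M.+1) A k l.
have [uN ltN _] := @inv_lower _ _ _ (blk_lo N.+1) (blk_dg _).
have [uM _ _] := @inv_lower _ _ _ (blk_lo M.+1) (blk_dg _).
pose X := \matrix_(k < M.+1, l < M.+1) invmx BN (inord k) (inord l).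
have XB : X *m BM = 1%:M.
  apply/matrixP => k l.
  have := congr1 (fun Mx : 'M[R]_(N.+1) => Mx (inord k) (inord l)) (mulVmx uN).
  have kN : (k <= N)%N by rewrite -ltnS; exact: leq_trans (ltn_ord k) _.
  have lN : (l <= N)%N by rewrite -ltnS; exact: leq_trans (ltn_ord l) _.
  pose f := fun m : nat => invmx BN (inord k) (inord m) * A m l.
  rewrite !mxE.
  have -> : ((inord k : 'I_(N.+1)) == inord l) = (k == l).
    by rewrite -val_eqE /= !inordK.
  move=> <-.
  transitivity (\sum_(m < M.+1) f m); first by apply: eq_bigr => m _; rewrite !mxE.
  transitivity (\sum_(m < N.+1) f m); last first.
    by apply: eq_bigr => m _; rewrite /f mxE inord_val inordK.
  rewrite (big_ord_widen N.+1 f) // big_mkcond; apply: eq_bigr => m _.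
  case: ifP => // /negbT; rewrite -leqNgt => Mm.
  rewrite /f ltN ?mul0r // inordK // inord_val.
  by apply: leq_ltn_trans Mm; rewrite -ltnS.
have XE : X = invmx BM by rewrite -[X]mulmx1 -(mulmxV uM) mulmxA XB mul1mx.
by rewrite -XE mxE !inordK.
Qed.

Lemma TRc' N i j : (i <= N)%N -> (j <= N)%N ->
  invmx (\matrix_(k < N.+1, l < N.+1) A k l) (inord i) (inord j) = trinv A i j.
Proof. by move=> iN jN; rewrite /trinv (@TRc N (maxn i j) i j) // ?geq_max ?iN ?jN ?leq_maxl ?leq_maxr. Qed.

Lemma S_of_trinv i k : A i k =
  invmx (\matrix_(a < (maxn i k).+1, b < (maxn i k).+1) trinv A a b) (inord i) (inord k).
Proof.
have [uN _ _] := @inv_lower _ _ _ (blk_lo (maxn i k).+1) (blk_dg _).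
have -> : \matrix_(a < (maxn i k).+1, b < (maxn i k).+1) trinv A a b
   = invmx (\matrix_(a < (maxn i k).+1, b < (maxn i k).+1) A a b).
  by apply/matrixP => a b; rewrite mxE -(@TRc' (maxn i k)) ?inord_val //; rewrite -ltnS; exact: ltn_ord.
by rewrite (@invmxK R) mxE !inordK // ltnS ?leq_maxl ?leq_maxr.
Qed.

Lemma det_lo N : \det (\matrix_(k < N, l < N) A k l) != 0.
Proof. by have [u _ _] := @inv_lower _ _ _ (blk_lo N) (blk_dg _); rewrite -unitfE -unitmxE. Qed.
End Low.

Lemma trinv_tr (B : smx R) i j : trinv B i j = trinv (strans B) j i.
Proof.
rewrite /trinv maxnC.
have -> : \matrix_(k < (maxn j i).+1, l < (maxn j i).+1) strans B k l
   = (\matrix_(k < (maxn j i).+1, l < (maxn j i).+1) B k l)^T.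
  by apply/matrixP => a b; rewrite !mxE.
by rewrite -trmx_inv mxE.
Qed.

Lemma TRU1 (B : smx R) : upperT B -> diagnz B -> forall i j, (j < i)%N -> trinv B i j = 0.
Proof.
move=> up dg i j ji; rewrite trinv_tr TR1 //.
by move=> a b ab; rewrite /strans up.
Qed.

Lemma det_up (B : smx R) N : upperT B -> diagnz B -> \det (\matrix_(k < N, l < N) B k l) != 0.
Proof.
move=> up dg; rewrite -det_tr.
have -> : (\matrix_(k < N, l < N) B k l)^T = \matrix_(k < N, l < N) strans B k l.
  by apply/matrixP => a b; rewrite !mxE.
apply: det_lo; first by move=> a b ab; rewrite /strans up.
by move=> a; rewrite /strans dg.
Qed.

Lemma gfin (S B : smx R) : lowerT S -> (forall i, S i i = 1) -> upperT B ->
  forall i k, smul (trinv S) B i k = \sum_(m < (minn i k).+1) trinv S i m * B m k.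
Proof.
move=> lo d1 up i k; rewrite /smul (@rsum_fin _ 0 (minn i k).+1) ?big_mkord //.
move=> m; rewrite ltnNge => /negbTE; rewrite leq_min => /negbT; rewrite negb_and -!ltnNge.
case/orP => h; first by rewrite TR1 ?mul0r // => a; rewrite d1 oner_neq0.
by rewrite up ?mulr0.
Qed.

Lemma LU (S1 S2 B1 B2 : smx R) : lowerT S1 -> lowerT S2 ->
  (forall i, S1 i i = 1) -> (forall i, S2 i i = 1) ->
  upperT B1 -> upperT B2 -> diagnz B1 -> diagnz B2 ->
  smul (trinv S1) B1 = smul (trinv S2) B2 -> S1 = S2 /\ B1 = B2.
Proof.
move=> l1 l2 d1 d2 u1 u2 n1 n2 Heq.
have dz1 : diagnz S1 by move=> a; rewrite d1 oner_neq0.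
have dz2 : diagnz S2 by move=> a; rewrite d2 oner_neq0.
have T1 : forall i, trinv S1 i i = 1 by move=> i; rewrite TR2 // d1 invr1.
have T2 : forall i, trinv S2 i i = 1 by move=> i; rewrite TR2 // d2 invr1.
have T : forall n i k, minn i k = n -> trinv S1 i k = trinv S2 i k /\ B1 i k = B2 i k.
  elim/ltn_ind => n IH.
  have E : forall i k, minn i k = n -> trinv S1 i n * B1 n k = trinv S2 i n * B2 n k.
    move=> i k ikn; have := f_equal (fun g : smx R => g i k) Heq.
    rewrite !gfin // ikn !big_ord_recr /=.
    have -> : \sum_(m < n) trinv S1 i m * B1 m k = \sum_(m < n) trinv S2 i m * B2 m k.
      apply: eq_bigr => m _.
      have [IHa _] := IH (minn i m) (leq_ltn_trans (geq_minr i m) (ltn_ord m)) i m erefl.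
      have [_ IHb] := IH (minn m k) (leq_ltn_trans (geq_minl m k) (ltn_ord m)) m k erefl.
      by rewrite IHa IHb.
    by move/addrI.
  have Bnn : B1 n n = B2 n n by have := E n n (minnn n); rewrite T1 T2 !mul1r.
  move=> i k ikn; case: (leqP i k) => ik.
  - move: ikn; rewrite (minn_idPl ik) => ein; subst n.
    split.
      move: (ik); rewrite leq_eqVlt => /orP [/eqP <-|ik']; [by rewrite T1 T2 | by rewrite !TR1].
    by have := E i k (minn_idPl ik); rewrite T1 T2 !mul1r.
  - move: ikn; rewrite (minn_idPr (ltnW ik)) => ekn; subst n.
    split; last by rewrite u1 ?u2.
    have := E i k (minn_idPr (ltnW ik)); rewrite Bnn => /mulIf; apply; exact: n2.
have TT : forall i k, trinv S1 i k = trinv S2 i k /\ B1 i k = B2 i k.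
  by move=> i k; exact: T (minn i k) i k erefl.
split; apply: funext => i; apply: funext => k; last by case: (TT i k).
rewrite S_of_trinv // [RHS]S_of_trinv //; congr (invmx _ _ _).
by apply/matrixP => a b; rewrite !mxE; case: (TT a b).
Qed.
End Tri.
Arguments lowerT {R} A.
Arguments upperT {R} A.
Arguments diagnz {R} A.

Section Diff.
Variables (R : realType) (V : normedModType R) (x0 : V).
Local Notation D f := (differentiable (f : V -> R) x0).

Lemma dcst (c : R) : D (fun _ => c).
Proof. exact: (differentiable_cst c). Qed.

Lemma dadd (f g : V -> R) : D f -> D g -> D (fun u => f u + g u).
Proof. by move=> df dg; have := differentiableD df dg. Qed.

Lemma dmul (f g : V -> R) : D f -> D g -> D (fun u => f u * g u).
Proof. by move=> df dg; have := differentiableM df dg. Qed.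

Lemma dinvr (f : V -> R) : D f -> f x0 != 0 -> D (fun u => (f u)^-1).
Proof. by move=> df nz; have := differentiableV df nz. Qed.

Lemma dsum (I : Type) (r : seq I) (P : pred I) (F : I -> V -> R) :
  (forall i, P i -> D (F i)) -> D (fun u => \sum_(i <- r | P i) F i u).
Proof.
move=> dF; elim: r => [|a r IH].
  by under eq_fun do rewrite big_nil; exact: dcst.
under eq_fun do rewrite big_cons.
case Pa: (P a); last exact: IH.
exact: dadd (dF a Pa) IH.
Qed.

Lemma dprod (I : Type) (r : seq I) (P : pred I) (F : I -> V -> R) :
  (forall i, P i -> D (F i)) -> D (fun u => \prod_(i <- r | P i) F i u).
Proof.
move=> dF; elim: r => [|a r IH].
  by under eq_fun do rewrite big_nil; exact: dcst.
under eq_fun do rewrite big_cons.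
case Pa: (P a); last exact: IH.
exact: dmul (dF a Pa) IH.
Qed.

Lemma ddet n (A : V -> 'M[R]_n) : (forall i j, D (fun u => A u i j)) ->
  D (fun u => \det (A u)).
Proof.
move=> dA; rewrite /determinant.
apply: dsum => s _; apply: dmul; first exact: dcst.
by apply: dprod => i _; exact: dA.
Qed.

Lemma dinvmx n (A : V -> 'M[R]_n) : (forall u, \det (A u) != 0) ->
  (forall i j, D (fun u => A u i j)) -> forall i j, D (fun u => invmx (A u) i j).
Proof.
move=> nz dA i j.
have -> : (fun u => invmx (A u) i j) =
   (fun u => (\det (A u))^-1 * ((-1) ^+ (j + i) * \det (row' j (col' i (A u))))).
  apply: funext => u; rewrite /invmx.
  have -> : (A u \in unitmx) by rewrite unitmxE unitfE nz.
  by rewrite !mxE.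
apply: dmul; first by apply: dinvr; [exact: ddet|exact: nz].
apply: dmul; first exact: dcst.
by apply: ddet => a b; rewrite /=; under eq_fun do rewrite !mxE; exact: dA.
Qed.
End Diff.

Section P.
Variable R : realType.

Lemma csize_ge {p} (n : 'I_p -> nat) a : (n a <= csize n)%N.
Proof. by rewrite /csize (bigD1 a) //= leq_addr. Qed.

Lemma kidx_le {p} (n : 'I_p -> nat) i a : (kidx n i a <= i)%N.
Proof.
rewrite /kidx [X in (_ <= X)%N](divn_eq i (csize n)); apply: leq_add; last exact: leq_subr.
by rewrite leq_mul2l csize_ge orbT.
Qed.

Lemma kidx_ge {p} (n : 'I_p -> nat) i a : (0 < n a)%N -> (i %/ csize n <= kidx n i a)%N.
Proof.
move=> na; rewrite /kidx; apply: leq_trans (leq_addr _ _).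
by rewrite -{1}[(i %/ _)%N]muln1 leq_mul2l na orbT.
Qed.

Lemma LamB p (n : 'I_p -> nat) a m' m : (0 < n a)%N -> ((m'.+2) * csize n <= m)%N ->
  Lam R n a m' m = 0.
Proof.
move=> na hm; rewrite /Lam; case: ifP => // /andP [_ /eqP hk].
have c0 : (0 < csize n)%N by apply: leq_trans na (csize_ge n a).
have h1 := kidx_le n m' a; have h2 := kidx_ge n m a na.
have h3 : (m'.+2 <= m %/ csize n)%N by rewrite leq_divRL.
by move: h1 h2 h3; rewrite hk; lia.
Qed.

Lemma fsupp_tb1 p1 p2 (t : times1 R p1) j (u : 'rV[R]_(p1 + p2)) :
  fsupp t -> fsupp (tblock1 t j u).
Proof.
move=> [N hN]; exists (maxn N j) => j' a; rewrite gtn_max => /andP [Nj jj].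
by rewrite /tblock1 (gtn_eqF jj) hN.
Qed.

Lemma fsupp_tb2 p1 p2 (t : times1 R p2) j (u : 'rV[R]_(p1 + p2)) :
  fsupp t -> fsupp (tblock2 t j u).
Proof.
move=> [N hN]; exists (maxn N j) => j' a; rewrite gtn_max => /andP [Nj jj].
by rewrite /tblock2 (gtn_eqF jj) hN.
Qed.

Lemma rsum_shift (f : nat -> R) (x c : R) N j : (1 <= j)%N ->
  (forall k, (N < k)%N -> f k = 0) ->
  rsum 1 (fun k => (if k == j then f k + c else f k) * x ^+ k)
  = rsum 1 (fun k => f k * x ^+ k) + c * x ^+ j.
Proof.
move=> j1 hf.
have M1 : (1 <= (maxn N j).+1)%N by [].
rewrite !(@rsum_fin _ _ 1 (maxn N j).+1) //; last first.
- move=> k; rewrite gtn_max => /andP [Nk jk].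
  by rewrite (gtn_eqF jk) hf ?mul0r.
- by move=> k; rewrite gtn_max => /andP [Nk _]; rewrite hf ?mul0r.
transitivity (\sum_(1 <= k < (maxn N j).+1) (f k * x ^+ k + (if k == j then c * x ^+ k else 0))).
  by apply: eq_bigr => k _; case: ifP; rewrite ?addr0 // mulrDl.
rewrite big_split /=; congr (_ + _).
rewrite (bigD1_seq j) /= ?eqxx ?mem_index_iota ?j1 ?ltnS ?leq_maxr //; last exact: iota_uniq.
by rewrite big1 ?addr0 // => k /negbTE ->.
Qed.
End P.

Section G.
Variable R : realType.

Lemma rsum_tb1 p1 p2 (t : times1 R p1) j (s x : R) a : (1 <= j)%N -> fsupp t ->
  rsum 1 (fun k => tblock1 t j (s *: (const_mx 1 : 'rV[R]_(p1 + p2))) k a * x ^+ k)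
  = rsum 1 (fun k => t k a * x ^+ k) + s * x ^+ j.
Proof.
move=> j1 [N hN]; rewrite -(@rsum_shift _ (fun k => t k a) x s N j j1) //; last by move=> k; exact: hN.
congr rsum; apply: funext => k; by rewrite /tblock1 !mxE mulr1.
Qed.

Lemma rsum_tb2 p1 p2 (t : times1 R p2) j (s x : R) a : (1 <= j)%N -> fsupp t ->
  rsum 1 (fun k => tblock2 t j (s *: (const_mx 1 : 'rV[R]_(p1 + p2))) k a * x ^+ k)
  = rsum 1 (fun k => t k a * x ^+ k) + s * x ^+ j.
Proof.
move=> j1 [N hN]; rewrite -(@rsum_shift _ (fun k => t k a) x s N j j1) //; last by move=> k; exact: hN.
congr rsum; apply: funext => k; by rewrite /tblock2 !mxE mulr1.
Qed.

Lemma gt_shift (mu : {measure set R -> \bar R}) (I : interval R) p1 p2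
  (n1 : 'I_p1 -> nat) (n2 : 'I_p2 -> nat) w1 w2 (t : times1 R p1) (tb : times1 R p2) j s :
  (1 <= j)%N -> fsupp t -> fsupp tb ->
  gt mu I n1 n2 w1 w2 (tblock1 t j (s *: (const_mx 1 : 'rV[R]_(p1 + p2))))
                      (tblock2 tb j (s *: (const_mx 1 : 'rV[R]_(p1 + p2))))
  = gt mu I n1 n2 w1 w2 t tb.
Proof.
move=> j1 ft ftb; rewrite /gt; apply: funext => i; apply: funext => l.
congr Rintegral; apply: funext => x; rewrite /gintegrand.
case: (aidx n1 i) => [a|] //; case: (aidx n2 l) => [b|] //.
rewrite rsum_tb1 // rsum_tb2 //; congr (_ * _).
rewrite opprD !expRD mulrACA -[X in _ * X]expRD subrr expR0 mulr1.
by [].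
Qed.

Lemma smul_lo (A L : smx R) i m : lowerT A -> smul A L i m = \sum_(m' < i.+1) A i m' * L m' m.
Proof.
move=> lo; rewrite /smul (@rsum_fin _ _ 0 i.+1) ?big_mkord // => k ik.
by rewrite lo ?mul0r.
Qed.

Lemma Lop_fin p1 (n1 : 'I_p1 -> nat) (A : smx R) a i k : (0 < n1 a)%N -> lowerT A ->
  Lop n1 A a i k = \sum_(m < i.+2 * csize n1)
     (\sum_(m' < i.+1) A i m' * Lam R n1 a m' m) * trinv A m k.
Proof.
move=> na lo; rewrite /Lop {1}/smul.
have -> : (fun m => smul A (Lam R n1 a) i m * trinv A m k)
   = (fun m => (\sum_(m' < i.+1) A i m' * Lam R n1 a m' m) * trinv A m k).
  by apply: funext => m; rewrite smul_lo.
rewrite (@rsum_fin _ _ 0 (i.+2 * csize n1)) ?big_mkord // => m im.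
rewrite big1 ?mul0r // => m' _; rewrite LamB ?mulr0 //.
apply: leq_trans im; rewrite leq_mul2r ltnS; apply/orP; right.
exact: ltn_ord.
Qed.

Lemma Lbop_fin p2 (n2 : 'I_p2 -> nat) (B : smx R) b i k : (0 < n2 b)%N -> upperT B -> diagnz B ->
  Lbop n2 B b i k = \sum_(m < k.+1)
     (\sum_(m' < m.+2 * csize n2) B i m' * Lam R n2 b m m') * trinv B m k.
Proof.
move=> nb up dg; rewrite /Lbop {1}/smul.
have -> : (fun m => smul B (strans (Lam R n2 b)) i m * trinv B m k)
   = (fun m => (\sum_(m' < m.+2 * csize n2) B i m' * Lam R n2 b m m') * trinv B m k).
  apply: funext => m; congr (_ * _).
  rewrite /smul (@rsum_fin _ _ 0 (m.+2 * csize n2)) ?big_mkord // => m' hm'.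
  by rewrite /strans LamB ?mulr0.
rewrite (@rsum_fin _ _ 0 k.+1) ?big_mkord // => m km.
by rewrite TRU1 ?mulr0.
Qed.

Lemma Aop_fin p1 (n1 : 'I_p1 -> nat) (A : smx R) a x i : lowerT A ->
  Aop n1 A a x i = \sum_(m < i.+1) A i m * chi n1 a x m.
Proof.
move=> lo; rewrite /Aop /smulv (@rsum_fin _ _ 0 i.+1) ?big_mkord // => k ik.
by rewrite lo ?mul0r.
Qed.

Lemma Abop_fin p2 (n2 : 'I_p2 -> nat) (B : smx R) b x i : upperT B -> diagnz B ->
  Abop n2 B b x i = \sum_(m < i.+1) trinv B m i * chi n2 b x m.
Proof.
move=> up dg; rewrite /Abop /smulv (@rsum_fin _ _ 0 i.+1) ?big_mkord // => k ik.
by rewrite /strans TRU1 ?mul0r.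
Qed.

Lemma dtrinv (V : normedModType R) (x0 : V) (U : V -> smx R) :
  (forall u N, \det (\matrix_(k < N, l < N) U u k l) != 0) ->
  (forall i k, differentiable (fun u => U u i k) x0) ->
  forall i k, differentiable (fun u => trinv (U u) i k) x0.
Proof.
move=> nz dU i k; rewrite /trinv.
apply: (@dinvmx _ _ _ _ (fun u => \matrix_(k0 < (maxn i k).+1, l < (maxn i k).+1) U u k0 l)).
  by move=> u; exact: nz.
by move=> a b; under eq_fun do rewrite mxE; exact: dU.
Qed.
End G.

Local Open Scope classical_set_scope.

Theorem proposition3p10 (R : realType)
  (mu : {finite_measure set R -> \bar R}) (I : interval R)
  (p1 p2 : nat) (hp1 : (0 < p1)%N) (hp2 : (0 < p2)%N)
  (w1 : 'I_p1 -> R -> R) (w2 : 'I_p2 -> R -> R)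
  (n1 : 'I_p1 -> nat) (n2 : 'I_p2 -> nat)
  (hn1 : forall a, (0 < n1 a)%N) (hn2 : forall b, (0 < n2 b)%N)
  (* integrals defining g(t) are convergent *)
  (hint : forall (t : times1 R p1) (tb : times1 R p2), fsupp t -> fsupp tb -> forall (i l : nat),
     mu.-integrable [set` I] (fun x => (gintegrand n1 n2 w1 w2 t tb i l x)%:E))
  (S Sb : times1 R p1 -> times1 R p2 -> smx R)
  (* S unit lower triangular, Sb upper triangular invertible *)
  (hS1 : forall t tb, fsupp t -> fsupp tb -> forall i, S t tb i i = 1)
  (hS0 : forall t tb, fsupp t -> fsupp tb -> forall i k, (i < k)%N -> S t tb i k = 0)
  (hSb1 : forall t tb, fsupp t -> fsupp tb -> forall i, Sb t tb i i != 0)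
  (hSb0 : forall t tb, fsupp t -> fsupp tb -> forall i k, (k < i)%N -> Sb t tb i k = 0)
  (* g(t) = S(t)^{-1} \bar S(t) *)
  (hfact : forall t tb, fsupp t -> fsupp tb -> gt mu I n1 n2 w1 w2 t tb = smul (trinv (S t tb)) (Sb t tb))
  (* smoothness of the factorization in t *)
  (hsmS : forall t tb, fsupp t -> fsupp tb -> forall j i k,
     differentiable (fun u : 'rV[R]_(p1 + p2) =>
       S (tblock1 t j u) (tblock2 tb j u) i k) 0)
  (hsmSb : forall t tb, fsupp t -> fsupp tb -> forall j i k,
     differentiable (fun u : 'rV[R]_(p1 + p2) =>
       Sb (tblock1 t j u) (tblock2 tb j u) i k) 0) :
  forall (j : nat), (1 <= j)%N -> forall (a' : 'I_p1) (b' : 'I_p2),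
  forall (t : times1 R p1) (tb : times1 R p2), fsupp t -> fsupp tb ->
    (forall i k, diagD (fun t tb => Lop n1 (S t tb) a' i k) t tb j = 0) /\
    (forall i k, diagD (fun t tb => Lbop n2 (Sb t tb) b' i k) t tb j = 0) /\
    (forall (x : R) i, diagD (fun t tb => Aop n1 (S t tb) a' x i) t tb j = 0) /\
    (forall (x : R) i, diagD (fun t tb => Abop n2 (Sb t tb) b' x i) t tb j = 0).
Proof.
move=> j j1 a' b' t tb ft ftb.
have fT1 : forall u : 'rV[R]_(p1+p2), fsupp (tblock1 t j u) by move=> u; exact: fsupp_tb1.
have fT2 : forall u : 'rV[R]_(p1+p2), fsupp (tblock2 tb j u) by move=> u; exact: fsupp_tb2.
have Ulo : forall u : 'rV[R]_(p1+p2), lowerT (S (tblock1 t j u) (tblock2 tb j u)).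
  by move=> u; exact: hS0.
have Ud : forall u : 'rV[R]_(p1+p2), diagnz (S (tblock1 t j u) (tblock2 tb j u)).
  by move=> u i; rewrite hS1 ?oner_neq0.
have Uup : forall u : 'rV[R]_(p1+p2), upperT (Sb (tblock1 t j u) (tblock2 tb j u)).
  by move=> u; exact: hSb0.
have Ubd : forall u : 'rV[R]_(p1+p2), diagnz (Sb (tblock1 t j u) (tblock2 tb j u)).
  by move=> u; exact: hSb1.
have dU := hsmS t tb ft ftb j.
have dUb := hsmSb t tb ft ftb j.
have dTU : forall i k, differentiable (fun u : 'rV[R]_(p1+p2) =>
    trinv (S (tblock1 t j u) (tblock2 tb j u)) i k) 0.
  by apply: dtrinv => // u N; exact: det_lo.
have dTUb : forall i k, differentiable (fun u : 'rV[R]_(p1+p2) =>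
    trinv (Sb (tblock1 t j u) (tblock2 tb j u)) i k) 0.
  by apply: dtrinv => // u N; exact: det_up.
have t0 : tblock1 t j (0 : 'rV[R]_(p1+p2)) = t.
  by apply: funext => j'; apply: funext => a; rewrite /tblock1 mxE addr0; case: ifP.
have tb0 : tblock2 tb j (0 : 'rV[R]_(p1+p2)) = tb.
  by apply: funext => j'; apply: funext => a; rewrite /tblock2 mxE addr0; case: ifP.
have inv : forall s : R,
    S (tblock1 t j (s *: (const_mx 1 : 'rV[R]_(p1+p2)))) (tblock2 tb j (s *: (const_mx 1 : 'rV[R]_(p1+p2)))) = S t tb /\
    Sb (tblock1 t j (s *: (const_mx 1 : 'rV[R]_(p1+p2)))) (tblock2 tb j (s *: (const_mx 1 : 'rV[R]_(p1+p2)))) = Sb t tb.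
  move=> s.
  apply: (@LU R _ _ _ _ (hS0 _ _ (fT1 _) (fT2 _)) (hS0 _ _ ft ftb) (fun i => hS1 _ _ (fT1 _) (fT2 _) i)
     (fun i => hS1 _ _ ft ftb i) (hSb0 _ _ (fT1 _) (fT2 _)) (hSb0 _ _ ft ftb)
     (hSb1 _ _ (fT1 _) (fT2 _)) (hSb1 _ _ ft ftb)).
  rewrite -(hfact _ _ (fT1 _) (fT2 _)) -(hfact _ _ ft ftb).
  exact: gt_shift.
have iS : forall s : R,
    S (tblock1 t j (s *: (const_mx 1 : 'rV[R]_(p1+p2)))) (tblock2 tb j (s *: (const_mx 1 : 'rV[R]_(p1+p2))))
    = S (tblock1 t j (0 : 'rV[R]_(p1+p2))) (tblock2 tb j (0 : 'rV[R]_(p1+p2))).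
  by move=> s; case: (inv s) => -> _; congr S; apply: esym; [exact: t0|exact: tb0].
have iSb : forall s : R,
    Sb (tblock1 t j (s *: (const_mx 1 : 'rV[R]_(p1+p2)))) (tblock2 tb j (s *: (const_mx 1 : 'rV[R]_(p1+p2))))
    = Sb (tblock1 t j (0 : 'rV[R]_(p1+p2))) (tblock2 tb j (0 : 'rV[R]_(p1+p2))).
  by move=> s; case: (inv s) => _ ->; congr Sb; apply: esym; [exact: t0|exact: tb0].
split; [|split; [|split]].
- move=> i k; apply: key => /=; last by move=> s; rewrite iS.
  rewrite (_ : (fun u => _) = (fun u => \sum_(m < i.+2 * csize n1)
     (\sum_(m' < i.+1) S (tblock1 t j u) (tblock2 tb j u) i m' * Lam R n1 a' m' m)
        * trinv (S (tblock1 t j u) (tblock2 tb j u)) m k)); last first.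
    by apply: funext => u; rewrite Lop_fin.
  apply: dsum => m _; apply: dmul; last exact: dTU.
  by apply: dsum => m' _; apply: dmul; [exact: dU | exact: differentiable_cst].
- move=> i k; apply: key => /=; last by move=> s; rewrite iSb.
  rewrite (_ : (fun u => _) = (fun u => \sum_(m < k.+1)
     (\sum_(m' < m.+2 * csize n2) Sb (tblock1 t j u) (tblock2 tb j u) i m' * Lam R n2 b' m m')
        * trinv (Sb (tblock1 t j u) (tblock2 tb j u)) m k)); last first.
    by apply: funext => u; rewrite Lbop_fin.
  apply: dsum => m _; apply: dmul; last exact: dTUb.
  by apply: dsum => m' _; apply: dmul; [exact: dUb | exact: differentiable_cst].
- move=> x i; apply: key => /=; last by move=> s; rewrite iS.
  rewrite (_ : (fun u => _) = (fun u => \sum_(m < i.+1)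
     S (tblock1 t j u) (tblock2 tb j u) i m * chi n1 a' x m)); last first.
    by apply: funext => u; rewrite Aop_fin.
  by apply: dsum => m _; apply: dmul; [exact: dU | exact: differentiable_cst].
- move=> x i; apply: key => /=; last by move=> s; rewrite iSb.
  rewrite (_ : (fun u => _) = (fun u => \sum_(m < i.+1)
     trinv (Sb (tblock1 t j u) (tblock2 tb j u)) m i * chi n2 b' x m)); last first.
    by apply: funext => u; rewrite Abop_fin.
  by apply: dsum => m _; apply: dmul; [exact: dTUb | exact: differentiable_cst].
Qed.
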